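(* Let $f:\mathbb{R}^{d\times n}\to\mathbb{R}^m$ be $\mathcal{G}_{+}$-invariant and bi-Lipschitz with respect to $d_{\mathcal{G}_{+}}$. Fix an orthogonal matrix $R_0\in O(d)$ with $\det R_0=-1$ and $R_0^2=I_d$, and let $\psi:\mathbb{R}^{m\times 2}\to\mathbb{R}^k$ be invariant to swapping its two columns and bi-Lipschitz (as defined in the context). Then $\tilde f({X})=\psi(f({X}),f(R_0{X}))$ is $\mathcal{G}_{\pm}$-invariant and bi-Lipschitz with respect to $d_{\mathcal{G}_{\pm}}$.
   Context: Point sets are ${X}\in\mathbb{R}^{d\times n}$. $\mathcal{G}_{\pm}$ (resp. $\mathcal{G}_{+}$) acts by column permutations, a common matrix in $O(d)$ (resp. $SO(d)$) applied to all columns, and a common translation; a function is invariant if constant on orbits. $d_{\mathcal{G}_{\pm}}({X},{Y})=\min_{g\in\mathcal{G}_{\pm}}\|{X}-g{Y}\|_F$ and $d_{\mathcal{G}_{+}}({X},{Y})=\min_{g\in\mathcal{G}_{+}}\|{X}-g{Y}\|_F$. A function $F$ is bi-Lipschitz with respect to a metric $\rho$ if there are $0<c\le C$ with $c\,\rho({X},{Y})\le\|F({X})-F({Y})\|_2\le C\rho({X},{Y})$. For $\psi$, bi-Lipschitz means: there are $0<c_\psi\le C_\psi$ such that for all $a,b,a',b'\in\mathbb{R}^m$, with $\delta=\min\{\|a-a'\|_2+\|b-b'\|_2,\ \|a-b'\|_2+\|b-a'\|_2\}$, one has $c_\psi\delta\le\|\psi(a,b)-\psi(a',b')\|_2\le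 C_\psi\delta$. *)

(* Defs.v *)
From HB Require Import structures.
From mathcomp Require Import all_boot all_order all_algebra all_fingroup.
From mathcomp Require Import classical_sets reals.
Set Implicit Arguments. Unset Strict Implicit. Unset Printing Implicit Defensive.
Import Order.TTheory GRing.Theory Num.Theory.
Local Open Scope ring_scope.
Local Open Scope classical_set_scope.

Section Defs.
Variable R : realType.

Definition frob (p q : nat) (A : 'M[R]_(p, q)) : R :=
  Num.sqrt (\sum_(i < p) \sum_(j < q) A i j ^+ 2).

Definition orthogonal_mx (d : nat) (Q : 'M[R]_d) : Prop := Q *m Q^T = 1%:M.
Definition special_orthogonal_mx (d : nat) (Q : 'M[R]_d) : Prop :=
  orthogonal_mx Q /\ \det Q = 1.

(* Action of (sigma, Q, t) on X in R^{d x n}: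
   columns permuted by sigma, Q applied to every column, t added to every column. *)
Definition gact (d n : nat) (s : 'S_n) (Q : 'M[R]_d) (t : 'cV[R]_d)
    (X : 'M[R]_(d, n)) : 'M[R]_(d, n) :=
  Q *m X *m perm_mx s + t *m const_mx 1.

Definition group_invariant (d n p : nat) (orth : 'M[R]_d -> Prop)
    (F : 'M[R]_(d, n) -> 'cV[R]_p) : Prop :=
  forall (s : 'S_n) (Q : 'M[R]_d) (t : 'cV[R]_d) (X : 'M[R]_(d, n)),
    orth Q -> F (gact s Q t X) = F X.

Definition G_pm_invariant d n p (F : 'M[R]_(d, n) -> 'cV[R]_p) :=
  group_invariant (@orthogonal_mx d) F.
Definition G_plus_invariant d n p (F : 'M[R]_(d, n) -> 'cV[R]_p) :=
  group_invariant (@special_orthogonal_mx d) F.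

(* Quotient distance: min (= inf, the min being attained) of ||X - gY||_F over the group. *)
Definition group_dist (d n : nat) (orth : 'M[R]_d -> Prop)
    (X Y : 'M[R]_(d, n)) : R :=
  inf [set frob (X - gact g.1 g.2.1 g.2.2 Y) |
         g in [set g : 'S_n * ('M[R]_d * 'cV[R]_d) | orth g.2.1] ].

Definition d_G_pm d n (X Y : 'M[R]_(d, n)) := group_dist (@orthogonal_mx d) X Y.
Definition d_G_plus d n (X Y : 'M[R]_(d, n)) := group_dist (@special_orthogonal_mx d) X Y.

Definition bi_lipschitz (d n p : nat) (rho : 'M[R]_(d, n) -> 'M[R]_(d, n) -> R)
    (F : 'M[R]_(d, n) -> 'cV[R]_p) : Prop :=
  exists c C : R, 0 < c /\ c <= C /\
    forall X Y, c * rho X Y <= frob (F X - F Y) /\ frob (F X - F Y) <= C * rho X Y.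

Definition swap_invariant (m k : nat) (psi : 'cV[R]_m -> 'cV[R]_m -> 'cV[R]_k) : Prop :=
  forall a b, psi a b = psi b a.

Definition psi_bi_lipschitz (m k : nat) (psi : 'cV[R]_m -> 'cV[R]_m -> 'cV[R]_k) : Prop :=
  exists c C : R, 0 < c /\ c <= C /\
    forall a b a' b',
      let delta := Num.min (frob (a - a') + frob (b - b')) (frob (a - b') + frob (b - a')) in
      c * delta <= frob (psi a b - psi a' b') /\ frob (psi a b - psi a' b') <= C * delta.

End Defs.

(* Main.v *)
Require Import Defs.
From HB Require Import structures.
From mathcomp Require Import all_boot all_order all_algebra all_fingroup.
From mathcomp Require Import classical_sets reals.
Import Order.TTheory GRing.Theory Num.Theory.
Local Open Scope ring_scope.
Set Implicit Arguments. Unset Strict Implicit.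

Section Aux.
Variable R : realType.
Local Open Scope classical_set_scope.

Lemma frob_ge0 p q (A : 'M[R]_(p, q)) : 0 <= frob A.
Proof. exact: sqrtr_ge0. Qed.

Lemma gd_le d n (orth : 'M[R]_d -> Prop) (X Y : 'M[R]_(d, n)) (s : 'S_n) (Q : 'M[R]_d) (t : 'cV[R]_d) :
  orth Q -> group_dist orth X Y <= frob (X - Defs.gact s Q t Y).
Proof.
move=> oQ; rewrite /group_dist.
have hl : has_lbound [set frob (X - Defs.gact g.1 g.2.1 g.2.2 Y) |
         g in [set g : 'S_n * ('M[R]_d * 'cV[R]_d) | orth g.2.1] ].
  by exists 0 => y [g _ <-]; exact: frob_ge0.
apply: (ge_inf hl); by exists (s, (Q, t)).
Qed.

Lemma le_gd d n (orth : 'M[R]_d -> Prop) (X Y : 'M[R]_(d, n)) x :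
  orth 1%:M ->
  (forall s Q t, orth Q -> x <= frob (X - Defs.gact s Q t Y)) ->
  x <= group_dist orth X Y.
Proof.
move=> o1 H; rewrite /group_dist; apply: lb_le_inf.
  by exists (frob (X - Defs.gact 1%g 1%:M 0 Y)); exists (1%g, (1%:M, 0)).
by move=> y [g og <-]; apply: H.
Qed.

Lemma frob_tr p q (A : 'M[R]_(p, q)) : frob A = Num.sqrt (\tr (A^T *m A)).
Proof.
rewrite /frob /mxtrace exchange_big; congr Num.sqrt; apply: eq_bigr => j _.
rewrite !mxE; apply: eq_bigr => i _; by rewrite !mxE expr2.
Qed.

Lemma frob_orth d q (Q : 'M[R]_d) (A : 'M[R]_(d, q)) :
  orthogonal_mx Q -> frob (Q *m A) = frob A.
Proof.
move=> oQ; rewrite !frob_tr trmx_mul -!mulmxA (mulmxA Q^T) (mulmx1C oQ) mul1mx //.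
Qed.

Lemma orth_det d (Q : 'M[R]_d) : orthogonal_mx Q -> \det Q = 1 \/ \det Q = -1.
Proof.
move=> oQ; have : \det Q * \det Q = 1.
  by rewrite -{2}(det_tr Q) -det_mulmx oQ det1.
move=> h; have : (\det Q - 1) * (\det Q + 1) = 0.
  by rewrite mulrDr mulr1 mulrBl mul1r h; rewrite addrA subrK subrr.
move/eqP; rewrite mulf_eq0 => /orP [/eqP H|/eqP H]; [left|right].
  by apply/eqP; rewrite -subr_eq0 H.
by apply/eqP; rewrite -subr_eq0 opprK H.
Qed.

Lemma orth_mul d (P Q : 'M[R]_d) : orthogonal_mx P -> orthogonal_mx Q ->
  orthogonal_mx (P *m Q).
Proof.
move=> oP oQ; rewrite /orthogonal_mx trmx_mul mulmxA -(mulmxA P) oQ mulmx1 oP //.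
Qed.

Lemma orth1 d : orthogonal_mx (1%:M : 'M[R]_d).
Proof. by rewrite /orthogonal_mx trmx1 mulmx1. Qed.

Lemma so1 d : special_orthogonal_mx (1%:M : 'M[R]_d).
Proof. by split; [exact: orth1|exact: det1]. Qed.

Lemma gact_l d n (s : 'S_n) (Q P : 'M[R]_d) (t : 'cV[R]_d) (X : 'M[R]_(d, n)) :
  P *m Defs.gact s Q t X = Defs.gact s (P *m Q) (P *m t) X.
Proof. by rewrite /Defs.gact mulmxDr !mulmxA. Qed.

Lemma gact_r d n (s : 'S_n) (Q P : 'M[R]_d) (t : 'cV[R]_d) (X : 'M[R]_(d, n)) :
  Defs.gact s (Q *m P) t X = Defs.gact s Q t (P *m X).
Proof. by rewrite /Defs.gact !mulmxA. Qed.

Section R0.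
Variables (d n : nat) (R0 : 'M[R]_d).
Hypotheses (oR : orthogonal_mx R0) (dR : \det R0 = -1) (iR : R0 *m R0 = 1%:M).

Lemma so_conj Q : special_orthogonal_mx Q -> special_orthogonal_mx (R0 *m Q *m R0).
Proof.
case=> oQ dQ; split; first by apply: orth_mul => //; apply: orth_mul.
by rewrite !det_mulmx dQ dR mulr1 mulrNN mulr1.
Qed.

Lemma so_m Q : orthogonal_mx Q -> \det Q = -1 -> special_orthogonal_mx (Q *m R0).
Proof. by move=> oQ dQ; split; [apply: orth_mul|rewrite det_mulmx dQ dR mulrNN mulr1]. Qed.

Lemma so_m' Q : orthogonal_mx Q -> \det Q = -1 -> special_orthogonal_mx (R0 *m Q).
Proof. by move=> oQ dQ; split; [apply: orth_mul|rewrite det_mulmx dQ dR mulrNN mulr1]. Qed.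

Lemma L1 (X Z : 'M[R]_(d, n)) : d_G_plus (R0 *m X) (R0 *m Z) <= d_G_plus X Z.
Proof.
apply: le_gd; first exact: so1.
move=> s Q t sQ.
have := gd_le (R0 *m X) (R0 *m Z) s (R0 *m t) (so_conj sQ).
rewrite -gact_r -!mulmxA iR mulmx1 -gact_l -mulmxBr frob_orth // mulmxA. 
Qed.

Lemma L2 (X Y : 'M[R]_(d, n)) : d_G_pm X Y <= d_G_plus X Y.
Proof.
apply: le_gd; first exact: so1.
move=> s Q t [oQ _]; exact: gd_le.
Qed.

Lemma L3 (X Y : 'M[R]_(d, n)) : d_G_pm X Y <= d_G_plus X (R0 *m Y).
Proof.
apply: le_gd; first exact: so1.
move=> s Q t [oQ _]; rewrite -gact_r; apply: gd_le; exact: orth_mul.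
Qed.

Lemma L4 (X Y : 'M[R]_(d, n)) :
  Num.min (d_G_plus X Y) (d_G_plus X (R0 *m Y)) <= d_G_pm X Y.
Proof.
apply: le_gd; first exact: orth1.
move=> s Q t oQ; rewrite ge_min; case: (orth_det oQ) => dQ.
  by apply/orP; left; apply: gd_le.
apply/orP; right; have -> : Defs.gact s Q t Y = Defs.gact s (Q *m R0) t (R0 *m Y).
  by rewrite gact_r mulmxA iR mul1mx.
apply: gd_le; exact: so_m.
Qed.

End R0.
End Aux.


Lemma arith (R : realFieldType) (a b a' b' D D1 D1' D2 D2' F cf Cf cp Cp : R) :
  0 < cf -> cf <= Cf -> 0 < cp -> cp <= Cp ->
  0 <= a -> 0 <= b -> 0 <= a' -> 0 <= b' ->
  cf * D1 <= a -> a <= Cf * D1 -> cf * D1' <= b -> b <= Cf * D1' ->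
  cf * D2 <= a' -> a' <= Cf * D2 -> cf * D2' <= b' -> b' <= Cf * D2' ->
  D1' <= D1 -> D2' <= D2 -> D <= D1 -> D <= D2 -> Num.min D1 D2 <= D ->
  cp * Num.min (a + b) (a' + b') <= F -> F <= Cp * Num.min (a + b) (a' + b') ->
  cp * cf * D <= F /\ F <= Cp * (Cf + Cf) * D.
Proof.
move=> cf0 cfC cp0 cpC a0 b0 a'0 b'0 l1 u1 l2 u2 l3 u3 l4 u4 e1 e2 e3 e4 e5 lp up.
have Cf0 : 0 <= Cf := le_trans (ltW cf0) cfC.
have Cp0 : 0 <= Cp := le_trans (ltW cp0) cpC.
split.
  rewrite -mulrA; apply: le_trans lp; rewrite ler_pM2l // le_min; apply/andP; split.
    apply: le_trans (ler_wpM2l (ltW cf0) e3) _; apply: le_trans l1 _; by rewrite lerDl.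
  apply: le_trans (ler_wpM2l (ltW cf0) e4) _; apply: le_trans l3 _; by rewrite lerDl.
apply: le_trans up _; rewrite -mulrA ler_wpM2l // mulrDl.
move: e5; rewrite ge_min => /orP [h|h].
  apply: le_trans (_ : _ <= a + b) _; first by rewrite ge_min lexx.
  apply: lerD.
    by apply: le_trans u1 _; rewrite ler_wpM2l.
  by apply: le_trans u2 _; rewrite ler_wpM2l //; apply: le_trans e1 h.
apply: le_trans (_ : _ <= a' + b') _; first by rewrite ge_min lexx orbT.
apply: lerD.
  by apply: le_trans u3 _; rewrite ler_wpM2l.
by apply: le_trans u4 _; rewrite ler_wpM2l //; apply: le_trans e2 h.
Qed.

Theorem proposition1 (R : realType) (d n m k : nat)
    (f : 'M[R]_(d, n) -> 'cV[R]_m) (R0 : 'M[R]_d)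
    (psi : 'cV[R]_m -> 'cV[R]_m -> 'cV[R]_k) :
  G_plus_invariant f ->
  bi_lipschitz (@d_G_plus R d n) f ->
  orthogonal_mx R0 -> \det R0 = -1 -> R0 *m R0 = 1%:M ->
  swap_invariant psi ->
  psi_bi_lipschitz psi ->
  G_pm_invariant (fun X => psi (f X) (f (R0 *m X))) /\
  bi_lipschitz (@d_G_pm R d n) (fun X => psi (f X) (f (R0 *m X))).
Proof.
move=> finv [cf [Cf [cf0 [cfC fL]]]] oR dR iR psw [cp [Cp [cp0 [cpC pL]]]].
split.
  move=> s Q t X oQ /=; case: (orth_det oQ) => dQ.
    rewrite finv; last by split.
    rewrite gact_l -[X in Defs.gact _ _ _ X]mul1mx -iR -mulmxA -gact_r finv //.
    by apply: (so_conj oR dR); split.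
  rewrite gact_l (finv s (R0 *m Q)); last exact: (so_m' oR dR oQ dQ).
  have -> : Defs.gact s Q t X = Defs.gact s (Q *m R0) t (R0 *m X).
    by rewrite gact_r mulmxA iR mul1mx.
  rewrite finv; last exact: (so_m oR dR oQ dQ).
  by rewrite psw.
exists (cp * cf), (Cp * (Cf + Cf)); split; first by rewrite mulr_gt0.
split.
  apply: ler_pM => //; [exact: ltW|exact: ltW|].
  by apply: (le_trans cfC); rewrite lerDl; exact: le_trans (ltW cf0) cfC.
move=> X Y /=.
have [l1 u1] := fL X Y.
have [l2 u2] := fL (R0 *m X) (R0 *m Y).
have [l3 u3] := fL X (R0 *m Y).
have [l4 u4] := fL (R0 *m X) Y.
have [lp up] := pL (f X) (f (R0 *m X)) (f Y) (f (R0 *m Y)).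
have e1 := L1 oR dR iR X Y.
have e2 := L1 oR dR iR X (R0 *m Y); rewrite mulmxA iR mul1mx in e2.
have e3 := L2 X Y.
have e4 : d_G_pm X Y <= d_G_plus X (R0 *m Y) by apply: L3.
have e5 := L4 (R0:=R0) oR dR iR X Y.
exact: (arith cf0 cfC cp0 cpC (frob_ge0 _) (frob_ge0 _) (frob_ge0 _) (frob_ge0 _)
  l1 u1 l2 u2 l3 u3 l4 u4 e1 e2 e3 e4 e5 lp up).
Qed.
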